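(* Let $A$ be an $N_-\times N_-$-variety which is also a positive variety with potential $(A,\Phi,\Theta)$. Let $a_1,\dots,a_n$ be positive rational functions on $(A,\Phi,\Theta)$ and let $(F,F')\in\mathfrak n_-\times\mathfrak n_-$. If $$\frac{F\cdot a_i\cdot F'}{a_i}\prec\Phi\quad\text{for all } i\in[1,n],$$ then $\dfrac{F\cdot f\cdot F'}{f}\prec\Phi$ for every subtraction-free Laurent polynomial $f=f(a_1,\dots,a_n)$ in the functions $a_i$.
   Context: $N_-$ is the unipotent radical of a Borel subgroup $B_-$ of a connected reductive complex group, $\mathfrak n_-$ its Lie algebra. An $N_-\times N_-$-variety is a variety with commuting left and right algebraic $N_-$-actions; for $(F,F')\in\mathfrak n_-\times\mathfrak n_-$ and a function $f$, $(F\cdot f\cdot F')(a)=\frac{d}{dt}|_{t=0}f(\exp(-tF)\,a\,\exp(tF'))$, which acts as a derivation. A toric chart on an irreducible complex variety $A$ is an open embedding $\theta$ of a complex algebraic torus into $A$. A rational function on a torus is positive if it is a ratio of two Laurent polynomials with nonnegative real coefficients (not both zero). A positive variety with potential $(A,\Phi,\Theta)$ consists of an irreducible complex variety $A$, a rational function $\Phi$ on $A$, and a non-empty set $\Theta$ of toric charts such that $\Phi\circ\theta$ is positive for some $\theta\in\Theta$ and $\theta^{-1}\circ\theta'$ is a positive map (all coordinates positive) for all $\theta,\theta'\in\Theta$; a rational function $f$ on $A$ is positive if $f\circ\theta$ is positive for some (equivalently any) $\theta\in\Theta$. A rational function $f$ is dominated by $\Phi$, written $f\prec\Phi$, if $f=f^+-f^-$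 with $f^\pm$ positive and there is a polynomial $p$ with positive real coefficients such that $p(\Phi)-f^+$ and $p(\Phi)-f^-$ are positive with respect to $\Theta$. *)

(* Defs.v *)
From HB Require Import structures.
From mathcomp Require Import all_boot all_order all_algebra.
From mathcomp Require Import reals.
From mathcomp Require Import mpoly.
From mathcomp Require Import complex.
From mathcomp Require Import fraction.
Set Implicit Arguments. Unset Strict Implicit. Unset Printing Implicit Defensive.
Import GRing.Theory Num.Theory.
Local Open Scope ring_scope.

(* Setting: we work in the coordinates of one toric chart
   theta in Theta of the positive variety A of dimension m.  Via theta, the
   field of rational functions C(A) is identified with the field of rational
   functions on the torus (C^x)^m, i.e. the fraction field of
   C[x_1,...,x_m]. *)

Definition ratf (R : realType) (m : nat) : fieldType :=
  {fraction {mpoly R[i][m]}}.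

Definition tofr (R : realType) (m : nat) (P : {mpoly R[i][m]}) : ratf R m :=
  @FracField.tofrac _ P.

Definition ratf_cst (R : realType) (m : nat) (c : R[i]) : ratf R m :=
  tofr (c%:MP).

(* polynomial with nonnegative real coefficients (0 <= z in C means z real, z >= 0) *)
Definition nonneg_mpoly (R : realType) (m : nat) (P : {mpoly R[i][m]}) : Prop :=
  forall mon : 'X_{1..m}, 0 <= P@_mon.

Definition nonneg_laurent (R : realType) (m : nat) (g : ratf R m) : Prop :=
  exists (P : {mpoly R[i][m]}) (mon : 'X_{1..m}),
    nonneg_mpoly P /\ g = tofr P / tofr ('X_[mon] : {mpoly R[i][m]}).

Definition positive (R : realType) (m : nat) (f : ratf R m) : Prop :=
  exists g h : ratf R m,
    [/\ nonneg_laurent g, nonneg_laurent h, h != 0 & f = g / h].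

Definition peval (R : realType) (m : nat) (p : {poly R}) (Phi : ratf R m)
  : ratf R m :=
  \sum_(j < size p) ratf_cst m ((p`_j)%:C%C) * Phi ^+ j.

Definition dominated (R : realType) (m : nat) (f Phi : ratf R m) : Prop :=
  exists fp fm : ratf R m,
    [/\ positive fp, positive fm, f = fp - fm &
      exists p : {poly R}, (forall j, 0 <= p`_j) /\
        positive (peval p Phi - fp) /\ positive (peval p Phi - fm)].

(* C-linear derivation of the field of rational functions; models the
   operator f |-> F . f . F' *)
Definition is_derivation (R : realType) (m : nat) (D : ratf R m -> ratf R m)
  : Prop :=
  [/\ forall x y, D (x + y) = D x + D y,
      forall x y, D (x * y) = D x * y + x * D y &
      forall c, D (ratf_cst m c) = 0].

Definition sf_laurent (R : realType) (m n k : nat) (c : 'I_k -> R)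
  (e : 'I_k -> 'I_n -> int) (a : 'I_n -> ratf R m) : ratf R m :=
  \sum_(j < k) ratf_cst m ((c j)%:C%C) * \prod_(i < n) a i ^ e j i.

(* Main.v *)
Require Import Defs.
From HB Require Import structures.
From mathcomp Require Import all_boot all_order all_algebra.
From mathcomp Require Import reals.
From mathcomp Require Import mpoly.
From mathcomp Require Import complex.
From mathcomp Require Import fraction.
From mathcomp Require Import ring.
Set Implicit Arguments. Unset Strict Implicit. Unset Printing Implicit Defensive.
Import GRing.Theory Num.Theory.
Local Open Scope ring_scope.

Lemma nnX (R : realType) (m : nat) (mon : 'X_{1..m}) : nonneg_mpoly ('X_[mon] : {mpoly R[i][m]}).
Proof. by move=> k; rewrite mcoeffX ler0n. Qed.

Lemma nnD (R : realType) (m : nat) (P Q : {mpoly R[i][m]}) :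
  nonneg_mpoly P -> nonneg_mpoly Q -> nonneg_mpoly (P + Q).
Proof. by move=> hP hQ k; rewrite mcoeffD addr_ge0. Qed.

Lemma nnM (R : realType) (m : nat) (P Q : {mpoly R[i][m]}) :
  nonneg_mpoly P -> nonneg_mpoly Q -> nonneg_mpoly (P * Q).
Proof.
move=> hP hQ k; rewrite mcoeffM; apply: sumr_ge0 => i _; exact: mulr_ge0.
Qed.

Lemma X_neq0 (R : realType) (m : nat) (mon : 'X_{1..m}) : tofr ('X_[mon] : {mpoly R[i][m]}) != 0.
Proof.
rewrite /tofr tofrac_eq0; apply/eqP => h.
by have := congr1 (mcoeff mon) h; rewrite mcoeffX eqxx mcoeff0; move/eqP; rewrite oner_eq0.
Qed.

Lemma nlD (R : realType) (m : nat) (g h : ratf R m) :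
  nonneg_laurent g -> nonneg_laurent h -> nonneg_laurent (g + h).
Proof.
move=> [P [a [hP ->]]] [Q [b [hQ ->]]].
exists (P * 'X_[b] + Q * 'X_[a]), (a + b)%MM; split.
  by apply: nnD; apply: nnM => //; apply: nnX.
have ha := X_neq0 R a; have hb := X_neq0 R b.
rewrite /tofr in ha hb.
rewrite (addf_div _ _ ha hb) (mpolyXD _ a b) /tofr.
rewrite (tofracD (P * 'X_[b]) (Q * 'X_[a])) (tofracM P 'X_[b]) (tofracM Q 'X_[a]).
by rewrite (tofracM 'X_[a] 'X_[b]).
Qed.

Lemma nlM (R : realType) (m : nat) (g h : ratf R m) :
  nonneg_laurent g -> nonneg_laurent h -> nonneg_laurent (g * h).
Proof.
move=> [P [a [hP ->]]] [Q [b [hQ ->]]].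
exists (P * Q), (a + b)%MM; split; first exact: nnM.
rewrite (mpolyXD _ a b) /tofr (tofracM P Q) (tofracM 'X_[a] 'X_[b]).
by rewrite invfM mulrACA.
Qed.

Lemma nl_cst (R : realType) (m : nat) (c : R) : 0 <= c -> nonneg_laurent (ratf_cst m c%:C%C).
Proof.
move=> hc; exists (((c%:C)%C)%:MP), 0%MM; split.
  by move=> k; rewrite mcoeffC mulr_ge0 ?ler0n // ler0c.
by rewrite mpolyX0 /tofr tofrac1 divr1.
Qed.

Lemma nl0 (R : realType) (m : nat) : nonneg_laurent (0 : ratf R m).
Proof. by have := nl_cst m (Order.POrderTheory.lexx (0:R)); rewrite /ratf_cst /tofr !raddf0. Qed.

Lemma nl1 (R : realType) (m : nat) : nonneg_laurent (1 : ratf R m).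
Proof. by have := nl_cst m (@ler01 R); rewrite /ratf_cst /tofr !rmorph1. Qed.

Lemma pos_of_nl (R : realType) (m : nat) (g : ratf R m) : nonneg_laurent g -> positive g.
Proof.
move=> hg; exists g, 1; split => //; [exact: nl1| exact: oner_neq0 | by rewrite divr1].
Qed.

Lemma pos0 (R : realType) (m : nat) : positive (0 : ratf R m).
Proof. exact/pos_of_nl/nl0. Qed.

Lemma pos1 (R : realType) (m : nat) : positive (1 : ratf R m).
Proof. exact/pos_of_nl/nl1. Qed.

Lemma pos_cst (R : realType) (m : nat) (c : R) : 0 <= c -> positive (ratf_cst m c%:C%C).
Proof. by move=> hc; apply/pos_of_nl/nl_cst. Qed.

Lemma posD (R : realType) (m : nat) (x y : ratf R m) :
  positive x -> positive y -> positive (x + y).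
Proof.
move=> [g1 [h1 [hg1 hh1 nz1 ->]]] [g2 [h2 [hg2 hh2 nz2 ->]]].
exists (g1 * h2 + g2 * h1), (h1 * h2); split.
- by apply: nlD; apply: nlM.
- exact: nlM.
- exact: (mulf_neq0 nz1 nz2).
- by rewrite (addf_div _ _ nz1 nz2).
Qed.

Lemma posM (R : realType) (m : nat) (x y : ratf R m) :
  positive x -> positive y -> positive (x * y).
Proof.
move=> [g1 [h1 [hg1 hh1 nz1 ->]]] [g2 [h2 [hg2 hh2 nz2 ->]]].
exists (g1 * g2), (h1 * h2); split.
- exact: nlM.
- exact: nlM.
- exact: (mulf_neq0 nz1 nz2).
- by rewrite invfM mulrACA.
Qed.

Lemma posV (R : realType) (m : nat) (x : ratf R m) :
  positive x -> positive x^-1.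
Proof.
move=> [g [h [hg hh nz ->]]].
have [->|gnz] := eqVneq g 0; first by rewrite mul0r invr0; exact: pos0.
exists h, g; split => //; by rewrite invf_div.
Qed.

Lemma posMn (R : realType) (m : nat) (x : ratf R m) n :
  positive x -> positive (x *+ n).
Proof.
move=> hx; elim: n => [|n IH]; first by rewrite mulr0n; exact: pos0.
by rewrite mulrS; apply: posD.
Qed.

Lemma posn (R : realType) (m : nat) n : positive (n%:R : ratf R m).
Proof. exact/posMn/pos1. Qed.

Lemma posX (R : realType) (m : nat) (x : ratf R m) n :
  positive x -> positive (x ^+ n).
Proof.
move=> hx; elim: n => [|n IH]; first by rewrite expr0; exact: pos1.
by rewrite exprS; apply: posM.
Qed.

Lemma posXz (R : realType) (m : nat) (x : ratf R m) (e : int) :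
  positive x -> positive (x ^ e).
Proof.
move=> hx; case: e => n; first exact: (posX n hx).
change (positive ((x ^+ n.+1)^-1)); exact: (posV (posX n.+1 hx)).
Qed.

Lemma pos_sum (R : realType) (m : nat) (I : Type) (r : seq I) (P : pred I) (F : I -> ratf R m) :
  (forall i, P i -> positive (F i)) -> positive (\sum_(i <- r | P i) F i).
Proof.
move=> h; apply: (big_ind (fun x => positive x)) => //; [exact: pos0 | exact: posD].
Qed.

Lemma pos_prod (R : realType) (m : nat) (I : Type) (r : seq I) (P : pred I) (F : I -> ratf R m) :
  (forall i, P i -> positive (F i)) -> positive (\prod_(i <- r | P i) F i).
Proof.
move=> h; apply: (big_ind (fun x => positive x)) => //; [exact: pos1 | exact: posM].
Qed.

Lemma cstD (R : realType) (m : nat) (x y : R) :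
  ratf_cst m ((x + y)%:C%C) = ratf_cst m x%:C%C + ratf_cst m y%:C%C.
Proof. by rewrite /ratf_cst /tofr rmorphD /= !raddfD. Qed.

Lemma cst0 (R : realType) (m : nat) : ratf_cst m ((0:R)%:C%C) = 0.
Proof. by rewrite /ratf_cst /tofr !raddf0. Qed.

Lemma cst1 (R : realType) (m : nat) : ratf_cst m ((1:R)%:C%C) = 1.
Proof. by rewrite /ratf_cst /tofr !rmorph1. Qed.

Lemma peval_widen (R : realType) (m : nat) (p : {poly R}) (Phi : ratf R m) N :
  (size p <= N)%N -> peval p Phi = \sum_(j < N) ratf_cst m ((p`_j)%:C%C) * Phi ^+ j.
Proof.
move=> hN; rewrite /peval (big_ord_widen N (fun j => ratf_cst m ((p`_j)%:C%C) * Phi ^+ j) hN).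
rewrite big_mkcond; apply: eq_bigr => j _; case: ifP => // /negbT.
by rewrite -leqNgt => h; rewrite nth_default // cst0 mul0r.
Qed.

Lemma peval0 (R : realType) (m : nat) (Phi : ratf R m) : peval 0 Phi = 0.
Proof. by rewrite /peval size_poly0 big_ord0. Qed.

Lemma pevalD (R : realType) (m : nat) (p q : {poly R}) (Phi : ratf R m) :
  peval (p + q) Phi = peval p Phi + peval q Phi.
Proof.
set N := maxn (size p) (size q).
rewrite (@peval_widen _ _ (p + q) _ N) ?size_polyD //.
rewrite (@peval_widen _ _ p _ N) ?leq_maxl // (@peval_widen _ _ q _ N) ?leq_maxr //.
rewrite -big_split; apply: eq_bigr => j _; by rewrite coefD cstD mulrDl.
Qed.

Lemma peval_sum (R : realType) (m : nat) (I : Type) (r : seq I) (P : pred I) (F : I -> {poly R}) (Phi : ratf R m) :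
  peval (\sum_(i <- r | P i) F i) Phi = \sum_(i <- r | P i) peval (F i) Phi.
Proof. by apply: (big_morph (fun p => peval p Phi)) => [p q|]; [exact: pevalD | exact: peval0]. Qed.

Lemma pevalMn (R : realType) (m : nat) (p : {poly R}) (Phi : ratf R m) n :
  peval (p *+ n) Phi = peval p Phi *+ n.
Proof.
elim: n => [|n IH]; first by rewrite !mulr0n peval0.
by rewrite !mulrS pevalD IH.
Qed.

Lemma pos_peval (R : realType) (m : nat) (p : {poly R}) (Phi : ratf R m) :
  (forall j, 0 <= p`_j) -> positive Phi -> positive (peval p Phi).
Proof.
move=> hp hPhi; apply: pos_sum => j _; apply: posM; [exact: pos_cst | exact: posX].
Qed.

Definition le (R : realType) (m : nat) (x y : ratf R m) := positive (y - x).

Lemma le_trans (R : realType) (m : nat) (x y z : ratf R m) : le x y -> le y z -> le x z.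
Proof. by move=> h1 h2; rewrite /le -(subrKA y); apply: posD. Qed.

Lemma le_add (R : realType) (m : nat) (x1 y1 x2 y2 : ratf R m) :
  le x1 y1 -> le x2 y2 -> le (x1 + x2) (y1 + y2).
Proof. by move=> h1 h2; rewrite /le opprD addrACA; apply: posD. Qed.

Lemma le_mull (R : realType) (m : nat) (w x y : ratf R m) :
  positive w -> le x y -> le (w * x) (w * y).
Proof. by move=> hw h; rewrite /le -mulrBr; apply: posM. Qed.

Lemma le_refl (R : realType) (m : nat) (x : ratf R m) : le x x.
Proof. by rewrite /le subrr; exact: pos0. Qed.

Lemma le_addr (R : realType) (m : nat) (x y : ratf R m) : positive y -> le x (x + y).
Proof. by move=> hy; rewrite /le addrAC subrr add0r. Qed.

Lemma le_sum (R : realType) (m : nat) (I : Type) (r : seq I) (P : pred I) (F G : I -> ratf R m) :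
  (forall i, P i -> le (F i) (G i)) -> le (\sum_(i <- r | P i) F i) (\sum_(i <- r | P i) G i).
Proof.
move=> h; apply: (big_ind2 (fun x y => le x y)) => //; [exact: le_refl | exact: le_add].
Qed.

Lemma D0 (R : realType) (m : nat) (D : ratf R m -> ratf R m) : is_derivation D -> D 0 = 0.
Proof.
case=> hA _ _; have h := hA 0 0; rewrite addr0 in h.
by apply: (@addrI _ (D 0)); rewrite addr0 -h.
Qed.

Definition LD (R : realType) (m : nat) (D : ratf R m -> ratf R m) (x L : ratf R m) := D x = x * L.

Lemma D1 (R : realType) (m : nat) (D : ratf R m -> ratf R m) : is_derivation D -> D 1 = 0.
Proof. by case=> _ _ hc; rewrite -(cst1 R m) hc. Qed.

Lemma Dcst (R : realType) (m : nat) (D : ratf R m -> ratf R m) c x : is_derivation D ->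
  D (ratf_cst m c * x) = ratf_cst m c * D x.
Proof. by case=> _ hM hc; rewrite hM hc mul0r add0r. Qed.

Lemma Dsum (R : realType) (m : nat) (D : ratf R m -> ratf R m) (I : Type) (r : seq I) (P : pred I) (F : I -> ratf R m) :
  is_derivation D -> D (\sum_(i <- r | P i) F i) = \sum_(i <- r | P i) D (F i).
Proof. move=> hD; apply: (big_morph D) => [x y|]; [by case: hD | exact: D0]. Qed.

Lemma LD_base (R : realType) (m : nat) (D : ratf R m -> ratf R m) x :
  is_derivation D -> LD D x (D x / x).
Proof.
move=> hD; rewrite /LD; have [->|nz] := eqVneq x 0; first by rewrite mul0r D0.
by rewrite mulrC divfK.
Qed.

Lemma LD1 (R : realType) (m : nat) (D : ratf R m -> ratf R m) :
  is_derivation D -> LD D 1 0.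
Proof. by move=> hD; rewrite /LD mulr0 D1. Qed.

Lemma LDM (R : realType) (m : nat) (D : ratf R m -> ratf R m) x y L M :
  is_derivation D -> LD D x L -> LD D y M -> LD D (x * y) (L + M).
Proof.
case=> _ hM _ hx hy; rewrite /LD hM hx hy.
by rewrite mulrDr mulrAC mulrA.
Qed.

Lemma LDX (R : realType) (m : nat) (D : ratf R m -> ratf R m) x L n :
  is_derivation D -> LD D x L -> LD D (x ^+ n) (L *+ n).
Proof.
move=> hD hx; elim: n => [|n IH]; first by rewrite expr0 mulr0n; exact: LD1.
by rewrite exprSr mulrSr; apply: LDM.
Qed.

Lemma LDV (R : realType) (m : nat) (D : ratf R m -> ratf R m) x L :
  is_derivation D -> LD D x L -> LD D (x^-1) (- L).
Proof.
move=> hD hx; rewrite /LD; have [->|nz] := eqVneq x 0; first by rewrite invr0 mul0r D0.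
have h1 : D (x * x^-1) = 0 by rewrite mulfV // D1.
case: hD => _ hM _; rewrite hM hx in h1.
have h2 : x * D x^-1 = - L.
  apply/eqP; rewrite -subr_eq0 opprK addrC.
  by rewrite -h1 mulrAC mulfV // mul1r.
by rewrite -[D _](mulKf nz) h2.
Qed.

Lemma LDXz (R : realType) (m : nat) (D : ratf R m -> ratf R m) x L (e : int) :
  is_derivation D -> LD D x L -> LD D (x ^ e) (L *~ e).
Proof.
move=> hD hx; case: e => n.
  change (LD D (x ^+ n) (L *+ n)); exact: LDX.
change (LD D ((x ^+ n.+1)^-1) (- (L *+ n.+1))); apply: LDV => //; exact: LDX.
Qed.

Lemma LD_prod (R : realType) (m : nat) (D : ratf R m -> ratf R m) (I : Type) (r : seq I) (P : pred I) (F G : I -> ratf R m) :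
  is_derivation D -> (forall i, P i -> LD D (F i) (G i)) ->
  LD D (\prod_(i <- r | P i) F i) (\sum_(i <- r | P i) G i).
Proof.
move=> hD h; apply: (big_ind2 (LD D)) => //; [exact: LD1 | move=> *; exact: LDM].
Qed.

Lemma bound (R : realType) (m n : nat) (u v : 'I_n -> nat) (x y : 'I_n -> ratf R m) Q N :
  positive Q -> (forall i, le (x i) Q) -> (forall i, le (y i) Q) ->
  (\sum_i (u i + v i) <= N)%N ->
  le (\sum_i ((u i)%:R * x i + (v i)%:R * y i)) (Q *+ N).
Proof.
move=> hQ hx hy hN.
apply: (@le_trans _ _ _ (\sum_i ((u i + v i)%:R * Q))).
  apply: le_sum => i _; rewrite natrD mulrDl.
  by apply: le_add; apply: le_mull => //; apply: posn.
rewrite -mulr_suml -natr_sum /le -(mulr_natl Q N) -mulrBl -natrB //.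
by apply: posM => //; apply: posn.
Qed.

Lemma ringid (T : comRingType) (a b x y : T) :
  (a - b) * (x - y) = (x * a + y * b) - (x * b + y * a).
Proof. ring. Qed.

Lemma mul3 (F : fieldType) (x y z t : F) : x * (y * z) / t = x * y / t * z.
Proof. by rewrite mulrA mulrAC. Qed.

Unset Implicit Arguments.
Set Strict Implicit.
Theorem lemma3p16 (R : realType) (m n : nat) (Phi : ratf R m)
  (D : ratf R m -> ratf R m) (hD : is_derivation D)
  (hPhi : positive Phi)
  (a : 'I_n -> ratf R m) (ha : forall i, positive (a i))
  (hdom : forall i, dominated (D (a i) / a i) Phi)
  (k : nat) (c : 'I_k -> R) (e : 'I_k -> 'I_n -> int)
  (hc : forall j, 0 <= c j) :
  dominated (D (sf_laurent c e a) / sf_laurent c e a) Phi.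
Proof.
have /fin_all_exists [W hW] : forall i, exists t : ratf R m * ratf R m * {poly R},
   [/\ positive t.1.1, positive t.1.2, D (a i) / a i = t.1.1 - t.1.2,
       (forall j, 0 <= t.2`_j) /\ le t.1.1 (peval t.2 Phi) & le t.1.2 (peval t.2 Phi)].
  move=> i; have [fp [fm [h1 h2 h3 [p [hp [h4 h5]]]]]] := hdom i.
  by exists (fp, fm, p); split.
pose dp i := (W i).1.1; pose dm i := (W i).1.2.
pose q := \sum_(i < n) (W i).2.
pose Q := peval q Phi.
have hq : forall j, 0 <= q`_j.
  move=> j; rewrite /q coef_sum; apply: sumr_ge0 => i _.
  by have [_ _ _ [] ] := hW i.
have hQ : positive Q by apply: pos_peval.
have hrest : forall i, le (peval (W i).2 Phi) Q.
  move=> i; rewrite /Q /q peval_sum (bigD1 i) //=; apply: le_addr.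
  apply: pos_sum => l _; apply: pos_peval => //.
  by have [_ _ _ [] ] := hW l.
have hdpQ : forall i, le (dp i) Q.
  move=> i; apply: le_trans (hrest i); by have [_ _ _ [] ] := hW i.
have hdmQ : forall i, le (dm i) Q.
  move=> i; apply: le_trans (hrest i); by have [] := hW i.
set f := sf_laurent c e a.
have [f0|fnz] := eqVneq f 0.
  rewrite f0 invr0 mulr0; exists 0, 0; split; try exact: pos0; first by rewrite subr0.
  exists 0; split; first by move=> j; rewrite coef0.
  by rewrite peval0 subr0; split; exact: pos0.
pose ep (x : int) : nat := if x is Posz k then k else 0%N.
pose en (x : int) : nat := if x is Negz k then k.+1 else 0%N.
have hz : forall x : int, x%:~R = (ep x)%:R - (en x)%:R :> ratf R m.
  by case=> x /=; [rewrite subr0 | rewrite NegzE mulrNz sub0r].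
pose M j := \prod_(i < n) a i ^ e j i.
pose w j := ratf_cst m (c j)%:C%C * M j / f.
pose A j := \sum_(i < n) ((ep (e j i))%:R * dp i + (en (e j i))%:R * dm i).
pose B j := \sum_(i < n) ((ep (e j i))%:R * dm i + (en (e j i))%:R * dp i).
pose N := (\sum_(j < k) \sum_(i < n) (ep (e j i) + en (e j i)))%N.
have hf : positive f.
  apply: pos_sum => j _; apply: posM; first exact: pos_cst.
  by apply: pos_prod => i _; apply: posXz.
have hw : forall j, positive (w j).
  move=> j; apply: posM; last exact: posV.
  apply: posM; first exact: pos_cst.
  by apply: pos_prod => i _; apply: posXz.
have hw1 : \sum_j w j = 1 by rewrite /w -mulr_suml divff.
have hN : forall j, (\sum_(i < n) (ep (e j i) + en (e j i)) <= N)%N.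
  by move=> j; rewrite /N (bigD1 j) //= leq_addr.
exists (\sum_j w j * A j), (\sum_j w j * B j); split.
- apply: pos_sum => j _; apply: posM => //; apply: pos_sum => i _.
  apply: posD; apply: posM; try exact: posn; by have [] := hW i.
- apply: pos_sum => j _; apply: posM => //; apply: pos_sum => i _.
  apply: posD; apply: posM; try exact: posn; by have [] := hW i.
- have hLD : forall j, LD D (M j) (\sum_(i < n) (D (a i) / a i) *~ e j i).
    move=> j; apply: LD_prod => // i _; apply: LDXz => //; exact: LD_base.
  pose L j := \sum_(i < n) (D (a i) / a i) *~ e j i.
  have hDf : D f = \sum_j ratf_cst m (c j)%:C%C * (M j * L j).
    rewrite /f /sf_laurent Dsum //; apply: eq_bigr => j _; by rewrite Dcst // hLD.
  have hL : forall j, L j = A j - B j.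
    move=> j; rewrite /L /A /B -sumrB; apply: eq_bigr => i _.
    have [_ _ -> _ _] := hW i.
    by rewrite -mulrzr hz ringid.
  rewrite hDf mulr_suml -sumrB; apply: eq_bigr => j _.
  by rewrite -mulrBr -hL /w mul3.
- exists (q *+ N); split.
    by move=> j; rewrite coefMn mulrn_wge0.
  rewrite pevalMn -[peval q Phi *+ N]mul1r -hw1 mulr_suml -/Q.
  split; apply: le_sum => j _; apply: le_mull => //; apply: bound => //.
Qed.
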